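(* Let $X$ be a set and $F:\mathcal{P}(X)\to\mathcal{P}(X)$ a closure operator. Then: (1) there exist a set $Y$ and a relation $r\subseteq X\times Y$ with $F=[r]\circ\langle r^{\sim}\rangle$, and there exist a set $Y'$ and a relation $r'\subseteq X\times Y'$ with $F=r'^{\perp}\circ r'^{\sim\perp}$; (2) for every cardinal $\kappa$, the following are equivalent: (a) there exist a set $Y$ with $|Y|=\kappa$ and $r\subseteq X\times Y$ with $F=[r]\circ\langle r^{\sim}\rangle$; (b) there exist a set $Y$ with $|Y|=\kappa$ and $r\subseteq X\times Y$ with $F=r^{\perp}\circ (r^{\sim})^{\perp}$; (c) the complete inf-lattice $(\mathbf{Fix}(F),\subseteq,\bigcap)$ has an inf-basis indexed by a set of cardinality $\kappa$.
   Context: A closure operator on $\mathcal{P}(X)$ is a map $F$ that is monotonic, expansive ($U\subseteq F(U)$), and satisfies $F(F(U))\subseteq F(U)$; $\mathbf{Fix}(F)=\{U\subseteq X\mid F(U)=U\}$, which is closed under arbitrary intersections. An inf-basis of $(\mathbf{Fix}(F),\subseteq,\bigcap)$ is a family $(U_i)_{i\in I}$ of elements of $\mathbf{Fix}(F)$ (repetitions allowed) such that every $V\in\mathbf{Fix}(F)$ satisfies $V=\bigcap\{U_i\mid V\subseteq U_i\}$ (empty intersection $=X$). For $r\subseteq X\times Y$, $r^{\sim}=\{(y,x)\mid (x,y)\in r\}$. For $t\subseteq A\times B$, maps $\mathcal{P}(B)\to\mathcal{P}(A)$: $\langle t\rangle(V)=\{a\mid \exists b,\ (a,b)\in t\wedge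 b\in V\}$, $[t](V)=\{a\mid \forall b,\ (a,b)\in t\Rightarrow b\in V\}$, $t^{\perp}(V)=\{a\mid \forall b\in V,\ (a,b)\in t\}$. Classical logic is used. *)

(* Defs.v *)
Definition subset {A : Type} (U V : A -> Prop) : Prop := forall a, U a -> V a.
Definition set_eq {A : Type} (U V : A -> Prop) : Prop := forall a, U a <-> V a.

Definition map_eq {A B : Type} (F G : (A -> Prop) -> (B -> Prop)) : Prop :=
  forall U, set_eq (F U) (G U).

Definition closure_operator {X : Type} (F : (X -> Prop) -> (X -> Prop)) : Prop :=
  (forall U V, subset U V -> subset (F U) (F V)) /\
  (forall U, subset U (F U)) /\
  (forall U, subset (F (F U)) (F U)).

Definition Fix {X : Type} (F : (X -> Prop) -> (X -> Prop)) (U : X -> Prop) : Prop :=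
  set_eq (F U) U.

(* Inf-basis of (Fix F, ⊆, ⋂): a family indexed by I of fixed points such that
   every fixed point V is the intersection of the members containing it
   (empty intersection = X). *)
Definition inf_basis {X I : Type} (F : (X -> Prop) -> (X -> Prop))
  (U : I -> (X -> Prop)) : Prop :=
  (forall i, Fix F (U i)) /\
  (forall V, Fix F V ->
     forall x, V x <-> (forall i, subset V (U i) -> U i x)).

Definition conv {A B : Type} (r : A -> B -> Prop) : B -> A -> Prop :=
  fun b a => r a b.

Definition diam {A B : Type} (t : A -> B -> Prop) (V : B -> Prop) : A -> Prop :=
  fun a => exists b, t a b /\ V b.
Definition box {A B : Type} (t : A -> B -> Prop) (V : B -> Prop) : A -> Prop :=
  fun a => forall b, t a b -> V b.
Definition perp {A B : Type} (t : A -> B -> Prop) (V : B -> Prop) : A -> Prop :=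
  fun a => forall b, V b -> t a b.

Definition comp {A B C : Type} (G : B -> C) (H : A -> B) : A -> C := fun x => G (H x).

Definition equipotent (A B : Type) : Prop :=
  exists (f : A -> B) (g : B -> A),
    (forall a, g (f a) = a) /\ (forall b, f (g b) = b).

(* Main.v *)
Require Import Defs.
From Stdlib Require Import Classical.

Definition neg {A B : Type} (r : A -> B -> Prop) : A -> B -> Prop := fun a b => ~ r a b.

Lemma bd_pp {X Y : Type} (r : X -> Y -> Prop) U x :
  comp (box r) (diam (conv r)) U x <-> comp (perp (neg r)) (perp (conv (neg r))) U x.
Proof.
  unfold comp, box, diam, perp, conv, neg; split.
  - intros H y H1 H2. destruct (H y H2) as [x' [Hr Hu]]. exact (H1 x' Hu Hr).
  - intros H y Hr. apply NNPP; intro Hn. apply (H y); [|exact Hr].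
    intros x' Hu Hr'. apply Hn; eauto.
Qed.

Lemma pp_bd {X Y : Type} (r : X -> Y -> Prop) U x :
  comp (perp r) (perp (conv r)) U x <-> comp (box (neg r)) (diam (conv (neg r))) U x.
Proof.
  unfold comp, box, diam, perp, conv, neg; split.
  - intros H y Hn. apply NNPP; intro Hn2. apply Hn, H. intros x' Hu.
    apply NNPP; intro Hr. apply Hn2; eauto.
  - intros H y H1. apply NNPP; intro Hn. destruct (H y Hn) as [x' [Hr Hu]]. eauto.
Qed.

Lemma ib_pp {X I : Type} (F : (X -> Prop) -> (X -> Prop)) (U : I -> X -> Prop) :
  closure_operator F ->
  (inf_basis F U <-> map_eq F (comp (perp (fun x i => U i x)) (perp (conv (fun x i => U i x))))).
Proof.
  intros [Hm [He Hi]]. unfold inf_basis, map_eq, set_eq, comp, perp, conv, Fix, subset in *.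
  split.
  - intros [Hf Hb] V x. split.
    + intros HF i HV. assert (HFV : forall a, F (F V) a <-> F V a) by (intro a; split; auto).
      apply (proj1 (Hb (F V) HFV x) HF). intros a Ha.
      apply (Hf i a). apply (Hm V (U i)); auto.
    + intros H. assert (HFV : forall a, F (F V) a <-> F V a) by (intro a; split; auto).
      apply (proj2 (Hb (F V) HFV x)). intros i Hs. apply H. intros a Ha. apply Hs; auto.
  - intros H. split.
    + intros i a; split; [|apply He]. intros Ha. apply (proj1 (H (U i) a) Ha i). auto.
    + intros V HV x. split.
      * intros Hx i Hs. apply (proj1 (H V x)); [apply He; auto | auto].
      * intros Hx. apply HV. apply (proj2 (H V x)). intros i Hs. apply Hx. auto.
Qed.

Theorem corollary3 (X : Type) (F : (X -> Prop) -> (X -> Prop)) :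
  closure_operator F ->
  ( (exists (Y : Type) (r : X -> Y -> Prop),
        map_eq F (comp (box r) (diam (conv r)))) /\
    (exists (Y' : Type) (r' : X -> Y' -> Prop),
        map_eq F (comp (perp r') (perp (conv r')))) ) /\
  (forall K : Type,
     ( (exists (Y : Type) (r : X -> Y -> Prop), equipotent Y K /\
          map_eq F (comp (box r) (diam (conv r))))
       <->
       (exists (Y : Type) (r : X -> Y -> Prop), equipotent Y K /\
          map_eq F (comp (perp r) (perp (conv r)))) ) /\
     ( (exists (Y : Type) (r : X -> Y -> Prop), equipotent Y K /\
          map_eq F (comp (perp r) (perp (conv r))))
       <->
       (exists (I : Type) (U : I -> (X -> Prop)), equipotent I K /\
          inf_basis F U) )).
Proof.
  intros Hc.
  assert (Hpp : map_eq F (comp (perp (fun x (i : {V : X -> Prop | Fix F V}) => proj1_sig i x))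
                              (perp (conv (fun x (i : {V : X -> Prop | Fix F V}) => proj1_sig i x))))).
  { apply (proj1 (ib_pp F (fun i => proj1_sig i) Hc)). split.
    - intros [V HV]. exact HV.
    - intros V HV x. split.
      + intros Hx i Hs. apply Hs, Hx.
      + intros H. apply (H (exist _ V HV)). intros a Ha; exact Ha. }
  split; [split|].
  - eexists; exists (neg (fun x (i : {V : X -> Prop | Fix F V}) => proj1_sig i x)).
    intros U a. rewrite (Hpp U a). apply pp_bd.
  - eexists; eexists; exact Hpp.
  - intros K. split; split.
    + intros [Y [r [He Hm]]]. exists Y, (neg r). split; [exact He|].
      intros U a. rewrite (Hm U a). apply bd_pp.
    + intros [Y [r [He Hm]]]. exists Y, (neg r). split; [exact He|].
      intros U a. rewrite (Hm U a). apply pp_bd.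
    + intros [Y [r [He Hm]]]. exists Y, (fun y x => r x y). split; [exact He|].
      apply (proj2 (ib_pp F (fun y x => r x y) Hc)). exact Hm.
    + intros [I [U [He Hb]]]. exists I, (fun x i => U i x). split; [exact He|].
      apply (proj1 (ib_pp F U Hc)). exact Hb.
Qed.
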